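(* Let $\mathcal{U}\subseteq\mathbb{R}^d$, $\mathcal{V}\subseteq\mathbb{R}^D$ be compact convex with $\|u\|\le B$ for all $u\in\mathcal{U}$. Let $f:\mathcal{U}\times\mathcal{V}\to\mathbb{R}$ be continuous, with $f(\cdot,v)$ convex and differentiable for every $v$, $\|\nabla_u f(u,v)\|\le L$ for all $(u,v)$, $f(u,\cdot)$ $l$-Lipschitz and $\nabla_u f(u,\cdot)$ $r$-Lipschitz for every $u$. Let $\phi$ attain its minimum $\phi^\ast=\phi(u^\ast)$ on $\mathcal{U}$. Consider sequences $u_1,u_2,\dots\in\mathcal{U}$ and finite sets $A_1,A_2,\dots\subseteq\mathcal{V}$, numbers $\epsilon_i\ge0$, $\rho_i\ge0$, $\xi_i\ge0$, with updates $u_{i+1}=u_i-\rho_i z_i$ where $z_i\in\mathrm{co}\{\nabla_u f(u_i,v): v\in R^{\epsilon_i}_{A_i}(u_i)\}$. Suppose there is $i_0\ge1$ such that for all $i\ge i_0$: $R(u_i)$ and $S(u_i)$ are finite, $\epsilon_i<\zeta_i$, and $\max[d_H(R(u_i),A_i),d_H(A_i,S(u_i))]\le\delta_i$ where $\delta_i<\tfrac12(\zeta_i-\epsilon_i)/l$ and $\delta_i\le\tfrac12\xi_i/(rB)$. If $\sum_i\rho_i=\infty$, $\sum_i\rho_i^2<\infty$ and $\sum_i\rho_i\xi_i<\infty$, then $\min[\phi(u_1),\dots,\phi(u_i)]\to\phi^\ast$ as $i\to\infty$.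
   Context: Definitions: $\phi(u)=\max_{v\in\mathcal{V}} f(u,v)$, $R(u)=\{v\in\mathcal{V}: f(u,v)=\phi(u)\}$, $S(u)=\{v_0\in\mathcal{V}:\exists r>0,\ \forall v\in\mathcal{V},\ \|v_0-v\|\le r\Rightarrow f(u,v_0)\ge f(u,v)\}$ (local maximum points of $f(u,\cdot)$). $\zeta_i=\phi(u_i)-\max_{v\in S(u_i)\setminus R(u_i)}f(u_i,v)$, with $\zeta_i=\infty$ if $S(u_i)=R(u_i)$. For finite $A$: $\phi_A(u)=\max_{v\in A}f(u,v)$, $R^\epsilon_A(u)=\{v\in A:\phi_A(u)-f(u,v)\le\epsilon\}$. $d_H(X,Y)=\max_{x\in X}\min_{y\in Y}\|x-y\|$. $\mathrm{co}$ denotes convex hull. *)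

(* Defs.v *)
From mathcomp Require Import ssreflect ssrfun ssrbool eqtype ssrnat fintype bigop.
From Stdlib Require Import Reals List Classical.
Open Scope R_scope.

Definition vec (d : nat) := 'I_d -> R.
Definition vzero {d} : vec d := fun _ => 0.
Definition vadd {d} (x y : vec d) : vec d := fun i => x i + y i.
Definition vsub {d} (x y : vec d) : vec d := fun i => x i - y i.
Definition vscale {d} (a : R) (x : vec d) : vec d := fun i => a * x i.
Definition dot {d} (x y : vec d) : R := \big[Rplus/0]_(i < d) (x i * y i).
Definition norm {d} (x : vec d) : R := sqrt (dot x x).

Definition open_set {d} (O : vec d -> Prop) : Prop :=
  forall x, O x -> exists e, 0 < e /\ forall y, norm (vsub y x) < e -> O y.
Definition compact_set {d} (K : vec d -> Prop) : Prop :=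
  forall (I : Type) (O : I -> vec d -> Prop),
    (forall i, open_set (O i)) -> (forall x, K x -> exists i, O i x) ->
    exists l : list I, forall x, K x -> exists i, In i l /\ O i x.
Definition convex_set {d} (K : vec d -> Prop) : Prop :=
  forall x y t, K x -> K y -> 0 <= t <= 1 ->
    K (vadd (vscale t x) (vscale (1 - t) y)).
Definition convex_fun_on {d} (K : vec d -> Prop) (g : vec d -> R) : Prop :=
  forall x y t, K x -> K y -> 0 <= t <= 1 ->
    g (vadd (vscale t x) (vscale (1 - t) y)) <= t * g x + (1 - t) * g y.

Definition cont_on2 {d D} (K1 : vec d -> Prop) (K2 : vec D -> Prop)
  (f : vec d -> vec D -> R) : Prop :=
  forall x v, K1 x -> K2 v -> forall e, 0 < e -> exists de, 0 < de /\
    forall x' v', K1 x' -> K2 v' -> norm (vsub x' x) < de -> norm (vsub v' v) < de ->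
      Rabs (f x' v' - f x v) < e.

Definition has_gradient_on {d} (K : vec d -> Prop) (g : vec d -> R) (gr : vec d -> vec d) : Prop :=
  forall x, K x -> forall e, 0 < e -> exists de, 0 < de /\
    forall y, K y -> norm (vsub y x) < de ->
      Rabs (g y - g x - dot (gr x) (vsub y x)) <= e * norm (vsub y x).

Definition lipschitz_on {D} (K : vec D -> Prop) (g : vec D -> R) (c : R) : Prop :=
  forall v w, K v -> K w -> Rabs (g v - g w) <= c * norm (vsub v w).
Definition lipschitz_vec_on {D d} (K : vec D -> Prop) (g : vec D -> vec d) (c : R) : Prop :=
  forall v w, K v -> K w -> norm (vsub (g v) (g w)) <= c * norm (vsub v w).

Definition is_max_on {T} (P : T -> Prop) (g : T -> R) (m : R) : Prop :=
  (exists v, P v /\ g v = m) /\ (forall v, P v -> g v <= m).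
Definition is_min_on {T} (P : T -> Prop) (g : T -> R) (m : R) : Prop :=
  (exists v, P v /\ g v = m) /\ (forall v, P v -> m <= g v).

Definition finite_set {T} (P : T -> Prop) : Prop :=
  exists l : list T, forall x, P x <-> In x l.

Definition Rmaxset {d D} (V : vec D -> Prop) (f : vec d -> vec D -> R) (phi : vec d -> R)
  (u : vec d) (v : vec D) : Prop := V v /\ f u v = phi u.
Definition Slocset {d D} (V : vec D -> Prop) (f : vec d -> vec D -> R)
  (u : vec d) (v0 : vec D) : Prop :=
  V v0 /\ exists r, 0 < r /\ forall v, V v -> norm (vsub v0 v) <= r -> f u v <= f u v0.

(* zeta(u) in R u {+oo}, encoded as option R (None = +oo) *)
Definition zeta_is {d D} (V : vec D -> Prop) (f : vec d -> vec D -> R) (phi : vec d -> R)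
  (u : vec d) (z : option R) : Prop :=
  let SR := fun v => Slocset V f u v /\ ~ Rmaxset V f phi u v in
  ((forall v, ~ SR v) /\ z = None) \/
  (exists m, is_max_on SR (f u) m /\ z = Some (phi u - m)).

Definition dH_is {D} (X Y : vec D -> Prop) (m : R) : Prop :=
  exists h : vec D -> R,
    (forall x, X x -> is_min_on Y (fun y => norm (vsub x y)) (h x)) /\
    is_max_on X h m.

Definition Reps {d D} (f : vec d -> vec D -> R) (A : list (vec D)) (u : vec d)
  (eps : R) (v : vec D) : Prop :=
  In v A /\ exists m, is_max_on (fun w => In w A) (f u) m /\ m - f u v <= eps.

Definition conv_hull {d} (P : vec d -> Prop) (z : vec d) : Prop :=
  exists l : list (R * vec d),
    (forall p, In p l -> 0 <= fst p /\ P (snd p)) /\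
    fold_right (fun p s => fst p + s) 0 l = 1 /\
    z = fold_right (fun p s => vadd (vscale (fst p) (snd p)) s) vzero l.

Fixpoint runmin (g : nat -> R) (n : nat) : R :=
  match n with
  | O => g O
  | S k => Rmin (runmin g k) (g (S k))
  end.

(* Main.v *)
Require Import Defs.
From mathcomp Require Import ssreflect ssrfun ssrbool eqtype ssrnat fintype bigop.
From Stdlib Require Import Reals List Classical Lra Lia FunctionalExtensionality.
Open Scope R_scope.

Lemma sum_lin {d : nat} (a b : R) (F G : 'I_d -> R) :
  \big[Rplus/0]_(i < d) (a * F i + b * G i) =
  a * \big[Rplus/0]_(i < d) F i + b * \big[Rplus/0]_(i < d) G i.
Proof.
apply: (big_rec3 (fun p q s => p = a * q + b * s)).
- ring.
- move=> i p q s _ ->. ring.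
Qed.

Lemma sum_nonneg {d : nat} (F : 'I_d -> R) :
  (forall i, 0 <= F i) -> 0 <= \big[Rplus/0]_(i < d) F i.
Proof.
move=> H. apply: (big_rec (fun p => 0 <= p)); first lra.
move=> i p _ Hp. have := H i. lra.
Qed.

Lemma dot_sym {d} (x y : vec d) : dot x y = dot y x.
Proof. rewrite /dot. apply: eq_bigr => i _. ring. Qed.

Lemma dot_nonneg {d} (x : vec d) : 0 <= dot x x.
Proof. apply: sum_nonneg => i. nra. Qed.

Lemma dot_lin_l {d} a b (x y w : vec d) :
  dot (fun i => a * x i + b * y i) w = a * dot x w + b * dot y w.
Proof.
rewrite /dot -sum_lin. apply: eq_bigr => i _. ring.
Qed.

Lemma dot_lin_r {d} a b (x y w : vec d) :
  dot w (fun i => a * x i + b * y i) = a * dot w x + b * dot w y.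
Proof.
rewrite dot_sym dot_lin_l (dot_sym x) (dot_sym y). done.
Qed.

Lemma dot_ext {d} (x x' y y' : vec d) :
  (forall i, x i = x' i) -> (forall i, y i = y' i) -> dot x y = dot x' y'.
Proof.
move=> Hx Hy. rewrite /dot. apply: eq_bigr => i _. by rewrite Hx Hy.
Qed.

Lemma dot_zero_l {d} (w : vec d) : dot vzero w = 0.
Proof.
rewrite (@dot_ext _ _ (fun i => 0 * w i + 0 * w i) w w) //.
- rewrite dot_lin_l. ring.
- move=> i. rewrite /vzero. ring.
Qed.

Lemma dot_add_l {d} (x y w : vec d) : dot (vadd x y) w = dot x w + dot y w.
Proof.
rewrite (@dot_ext _ _ (fun i => 1 * x i + 1 * y i) w w) //.
- rewrite dot_lin_l. ring.
- move=> i. rewrite /vadd. ring.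
Qed.

Lemma dot_scale_l {d} a (x w : vec d) : dot (vscale a x) w = a * dot x w.
Proof.
rewrite (@dot_ext _ _ (fun i => a * x i + 0 * x i) w w) //.
- rewrite dot_lin_l. ring.
- move=> i. rewrite /vscale. ring.
Qed.

Lemma dot_sub_l {d} (x y w : vec d) : dot (vsub x y) w = dot x w - dot y w.
Proof.
rewrite (@dot_ext _ _ (fun i => 1 * x i + (-1) * y i) w w) //.
- rewrite dot_lin_l. ring.
- move=> i. rewrite /vsub. ring.
Qed.

Lemma dot_sub_r {d} (x y w : vec d) : dot w (vsub x y) = dot w x - dot w y.
Proof. by rewrite dot_sym dot_sub_l !(dot_sym w). Qed.

Lemma dot_quad {d} (x y : vec d) t :
  0 <= t*t * dot x x + 2 * t * dot x y + dot y y.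
Proof.
have H := dot_nonneg (fun i => t * x i + 1 * y i).
rewrite dot_lin_l !dot_lin_r in H. rewrite (dot_sym y x) in H. nra.
Qed.

Lemma disc (a b c : R) : 0 <= a -> (forall t, 0 <= t*t*a + 2*t*b + c) -> b*b <= a*c.
Proof.
move=> Ha H. case: (Req_dec a 0) => [Ha0|Ha0].
- subst a. case: (Req_dec b 0) => [->|Hb]; first lra.
  have Ht := H (-(c+1)/(2*b)).
  have E : (-(c+1)/(2*b)) * (-(c+1)/(2*b)) * 0 + 2 * (-(c+1)/(2*b)) * b + c = -1 by field.
  lra.
- have Hap : 0 < a by lra.
  have := H (-b/a). move=> Ht.
  have E : (- b / a) * (- b / a) * a + 2 * (- b / a) * b + c = c - b*b/a by field; lra.
  rewrite E in Ht.
  have Hm : 0 <= a * (c - b*b/a) by apply Rmult_le_pos; lra.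
  have E2 : a * (c - b*b/a) = a*c - b*b by field; lra.
  lra.
Qed.

Lemma Rabs_le_between a b : Rabs a <= b -> - b <= a <= b.
Proof. move=> H. split_Rabs; lra. Qed.

Lemma CS {d} (x y : vec d) : Rabs (dot x y) <= norm x * norm y.
Proof.
have H := disc (dot x x) (dot x y) (dot y y) (dot_nonneg x) (dot_quad x y).
rewrite /norm -sqrt_mult_alt; last exact: dot_nonneg.
rewrite -sqrt_Rsqr_abs. apply: sqrt_le_1_alt. rewrite /Rsqr. exact H.
Qed.

Lemma norm_nonneg {d} (x : vec d) : 0 <= norm x.
Proof. exact: sqrt_pos. Qed.

Lemma dot_le_sq {d} (x : vec d) L : norm x <= L -> dot x x <= L * L.
Proof.
move=> H. have H0 := norm_nonneg x. rewrite -(sqrt_sqrt (dot x x)); last exact: dot_nonneg.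
rewrite /norm in H H0. nra.
Qed.

Lemma norm_scale {d} t (x : vec d) : 0 <= t -> norm (vscale t x) = t * norm x.
Proof.
move=> Ht. rewrite /norm.
have -> : dot (vscale t x) (vscale t x) = (t * t) * dot x x.
{ rewrite dot_scale_l dot_sym dot_scale_l. ring. }
rewrite sqrt_mult_alt; last nra. by rewrite sqrt_square.
Qed.

Lemma grad_ineq {d} (U : vec d -> Prop) (g : vec d -> R) (gr : vec d -> vec d) x y :
  convex_set U -> convex_fun_on U g -> has_gradient_on U g gr -> U x -> U y ->
  g x + dot (gr x) (vsub y x) <= g y.
Proof.
move=> HU Hc Hg Hx Hy.
apply: Rnot_lt_le => Hlt.
set h := vsub y x.
set eta := g x + dot (gr x) h - g y.
have Heta : 0 < eta.
{ rewrite /eta. rewrite -/h in Hlt. lra. }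
have HN := norm_nonneg h.
case: (Req_dec (norm h) 0) => [HN0|HN0].
- have [de [Hde Hd]] := Hg x Hx 1 Rlt_0_1.
  have := Hd y Hy. rewrite -/h HN0 => H. have := H Hde.
  move=> /Rabs_le_between. rewrite /eta in Heta. lra.
- have HNp : 0 < norm h by lra.
  have He : 0 < eta / (2 * norm h) by apply: Rdiv_lt_0_compat; lra.
  have [de [Hde Hd]] := Hg x Hx _ He.
  set t := Rmin 1 (de / (2 * norm h)).
  have Ht0 : 0 < t by apply: Rmin_pos; [lra | apply: Rdiv_lt_0_compat; lra].
  have Ht1 : t <= 1 by apply: Rmin_l.
  have Ht2 : t <= de / (2 * norm h) by apply: Rmin_r.
  set p := vadd (vscale t y) (vscale (1 - t) x).
  have Hp : U p by apply: HU => //; lra.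
  have Hcv : g p <= t * g y + (1 - t) * g x by apply: Hc => //; lra.
  have Epx : vsub p x = vscale t h.
  { apply: functional_extensionality => i. rewrite /vsub /p /vadd /vscale /h /vsub. ring. }
  have Hn : norm (vsub p x) = t * norm h by rewrite Epx norm_scale; lra.
  have Hlt2 : norm (vsub p x) < de.
  { rewrite Hn. have : t * norm h <= de / 2.
    { have := Rmult_le_compat_r (norm h) _ _ HN Ht2. move=> H.
      have E : de / (2 * norm h) * norm h = de / 2 by field; lra. lra. }
    lra. }
  have := Hd p Hp Hlt2. rewrite Hn Epx (dot_sym (gr x)) dot_scale_l (dot_sym h).
  move=> /Rabs_le_between [H1 _].
  have E : eta / (2 * norm h) * (t * norm h) = t * eta / 2 by field; lra.
  rewrite E in H1. rewrite /eta in Heta E H1.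
  have : t * eta <= t * eta / 2.
  { rewrite /eta. nra. }
  nra.
Qed.

Definition Wsum {d} (l : list (R * vec d)) := fold_right (fun p s => fst p + s) 0 l.
Definition Zsum {d} (l : list (R * vec d)) :=
  fold_right (fun p s => vadd (vscale (fst p) (snd p)) s) vzero l.

Lemma conv_lower {d} (l : list (R * vec d)) (h : vec d) c :
  (forall p, In p l -> 0 <= fst p /\ c <= dot (snd p) h) -> c * Wsum l <= dot (Zsum l) h.
Proof.
elim: l => [|p l IH] H /=.
- rewrite dot_zero_l. lra.
- rewrite dot_add_l dot_scale_l.
  have [H1 H2] := H p (or_introl erefl).
  have := IH (fun q Hq => H q (or_intror Hq)). rewrite /Wsum. nra.
Qed.

Lemma conv_upper {d} (l : list (R * vec d)) (h : vec d) c :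
  (forall p, In p l -> 0 <= fst p /\ dot (snd p) h <= c) -> dot (Zsum l) h <= c * Wsum l.
Proof.
elim: l => [|p l IH] H /=.
- rewrite dot_zero_l. lra.
- rewrite dot_add_l dot_scale_l.
  have [H1 H2] := H p (or_introl erefl).
  have := IH (fun q Hq => H q (or_intror Hq)). rewrite /Wsum. nra.
Qed.

Lemma pair_bound {d} (x y : vec d) K : dot x x <= K -> dot y y <= K -> dot x y <= K.
Proof.
move=> Hx Hy. have H := dot_nonneg (vsub x y).
rewrite dot_sub_l !dot_sub_r (dot_sym y x) in H. lra.
Qed.

Lemma conv_sq {d} (l : list (R * vec d)) K :
  (forall p, In p l -> 0 <= fst p /\ dot (snd p) (snd p) <= K) -> Wsum l = 1 ->
  dot (Zsum l) (Zsum l) <= K.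
Proof.
move=> H HW.
have : dot (Zsum l) (Zsum l) <= (K * Wsum l) * Wsum l.
{ apply: conv_upper => p Hp. split; first by case: (H p Hp).
  rewrite dot_sym. apply: conv_upper => q Hq. split; first by case: (H q Hq).
  apply: pair_bound; [exact: (proj2 (H q Hq)) | exact: (proj2 (H p Hp))]. }
rewrite HW. lra.
Qed.

Lemma key {d D} (U : vec d -> Prop) (V : vec D -> Prop) (f : vec d -> vec D -> R)
  (gradf : vec d -> vec D -> vec d) (phi : vec d -> R) (x ustar : vec d)
  (A : list (vec D)) (eps xi l r B delta : R) (zt : option R) (v : vec D) :
  U x -> U ustar -> convex_set U ->
  (forall v, V v -> convex_fun_on U (fun x => f x v)) ->
  (forall v, V v -> has_gradient_on U (fun x => f x v) (fun x => gradf x v)) ->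
  lipschitz_on V (f x) l -> lipschitz_vec_on V (gradf x) r ->
  is_max_on V (f x) (phi x) -> is_max_on V (f ustar) (phi ustar) ->
  norm x <= B -> norm ustar <= B -> 0 < B -> 0 < l -> 0 < r ->
  (forall v, In v A -> V v) ->
  zeta_is V f phi x zt ->
  (match zt with None => True | Some zv => eps < zv end) ->
  (exists m1 m2, dH_is (Rmaxset V f phi x) (fun v => In v A) m1 /\
                 dH_is (fun v => In v A) (Slocset V f x) m2 /\
                 Rmax m1 m2 <= delta) ->
  (match zt with None => True | Some zv => delta < / 2 * (zv - eps) / l end) ->
  delta <= / 2 * xi / (r * B) ->
  Reps f A x eps v ->
  phi x - phi ustar - xi <= dot (gradf x v) (vsub x ustar).
Proof.
move=> Ux Us HU Hcv Hgr Hlip Hlipg Hmx Hms HBx HBs HB Hl Hr HAV Hz Hz1 [m1 [m2 [H1 [H2 Hd]]]] Hz2 Hxi Hrep.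
have Hm1 : m1 <= delta by apply: Rle_trans (Rmax_l _ _) Hd.
have Hm2 : m2 <= delta by apply: Rle_trans (Rmax_r _ _) Hd.
case: H1 => [h1 [Hmin1 [_ Hmax1]]].
case: H2 => [h2 [Hmin2 [_ Hmax2]]].
case: Hmx => [[w0 [Vw0 Ew0]] Hmxle].
have Rw0 : Rmaxset V f phi x w0 by split.
case: (Hmin1 w0 Rw0) => [[a [Ina Ea]] _].
have Ha : norm (vsub w0 a) <= delta by have := Hmax1 w0 Rw0; lra.
have Hla := Hlip w0 a Vw0 (HAV a Ina).
have Hlad : l * norm (vsub w0 a) <= l * delta by apply: Rmult_le_compat_l; lra.
case: Hrep => [Inv [m [[_ Hmax] Hm]]].
have Hfa := Hmax a Ina.
case: (Hmin2 v Inv) => [[s [Ss Es]] _].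
have Hs : norm (vsub v s) <= delta by have := Hmax2 v Inv; lra.
have Vs : V s by case: Ss.
have Hls := Hlip v s (HAV v Inv) Vs.
have Hlsd : l * norm (vsub v s) <= l * delta by apply: Rmult_le_compat_l; lra.
move/Rabs_le_between: Hla => Hla. move/Rabs_le_between: Hls => Hls.
have Hfs : phi x - 2 * (l * delta) - eps <= f x s by lra.
have Rs : f x s = phi x.
{ apply: NNPP => nR.
  have nR' : ~ Rmaxset V f phi x s by case.
  case: Hz => [[Hn Ezt]|[mz [[_ Hmz] Ezt]]].
  - by apply: (Hn s).
  - subst zt. have := Hmz s (conj Ss nR'). move=> Hsm.
    have E : l * (/ 2 * (phi x - mz - eps) / l) = (phi x - mz - eps) / 2 by field; lra.
    have : l * delta < l * (/ 2 * (phi x - mz - eps) / l) by apply: Rmult_lt_compat_l.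
    rewrite E. lra. }
have Hg := @grad_ineq _ U _ _ x ustar HU (Hcv s Vs) (Hgr s Vs) Ux Us.
simpl in Hg.
case: Hms => _ Hmsle.
have Hfus := Hmsle s Vs.
have Egs : dot (gradf x s) (vsub x ustar) = - dot (gradf x s) (vsub ustar x)
  by rewrite !dot_sub_r; ring.
set gd := vsub (gradf x v) (gradf x s).
have Hgd : norm gd <= r * delta.
{ apply: Rle_trans (Hlipg v s (HAV v Inv) Vs) _. apply: Rmult_le_compat_l; lra. }
have Edot : dot (gradf x v) (vsub x ustar) = dot (gradf x s) (vsub x ustar) + (dot gd x - dot gd ustar).
{ rewrite -dot_sub_r /gd dot_sub_l. ring. }
have Hn0 := norm_nonneg gd.
have C1 := CS gd x. have C2 := CS gd ustar.
move/Rabs_le_between: C1 => C1. move/Rabs_le_between: C2 => C2.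
have P1 : norm gd * norm x <= (r * delta) * B.
{ apply: Rmult_le_compat => //; exact: norm_nonneg. }
have P2 : norm gd * norm ustar <= (r * delta) * B.
{ apply: Rmult_le_compat => //; exact: norm_nonneg. }
have Hxi2 : 2 * (r * delta * B) <= xi.
{ have E : (r * B) * (/ 2 * xi / (r * B)) = xi / 2 by field; nra.
  have : (r * B) * delta <= (r * B) * (/ 2 * xi / (r * B)).
  { apply: Rmult_le_compat_l => //. nra. }
  rewrite E. lra. }
lra.
Qed.

Lemma runmin_ge (g : nat -> R) c : (forall i, c <= g i) -> forall n, c <= runmin g n.
Proof.
move=> H; elim=> [|n IH] /=; first exact: H.
apply: Rmin_glb => //.
Qed.

Lemma runmin_le (g : nat -> R) k n : (k <= n)%nat -> runmin g n <= g k.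
Proof.
elim: n => [|n IH] Hk.
- have -> : k = 0%nat by apply/eqP; rewrite -leqn0. simpl; lra.
- rewrite leq_eqVlt in Hk. case/orP: Hk => [/eqP ->|Hk] /=.
  + apply: Rmin_r.
  + apply: Rle_trans (Rmin_l _ _) (IH Hk).
Qed.

Lemma sum_growing (a : nat -> R) : (forall i, 0 <= a i) -> Un_growing (fun n => sum_f_R0 a n).
Proof. move=> H n /=. have := H n.+1. lra. Qed.
Theorem mainTheorem5 (d D : nat) (U : vec d -> Prop) (V : vec D -> Prop)
  (B L l r : R) (f : vec d -> vec D -> R) (gradf : vec d -> vec D -> vec d)
  (phi : vec d -> R) (ustar : vec d)
  (u : nat -> vec d) (A : nat -> list (vec D)) (eps rho xi : nat -> R)
  (z : nat -> vec d) (i0 : nat) :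
  compact_set U -> convex_set U -> compact_set V -> convex_set V ->
  (forall x, U x -> norm x <= B) ->
  0 < B -> 0 < l -> 0 < r ->
  cont_on2 U V f ->
  (forall v, V v -> convex_fun_on U (fun x => f x v)) ->
  (forall v, V v -> has_gradient_on U (fun x => f x v) (fun x => gradf x v)) ->
  (forall x v, U x -> V v -> norm (gradf x v) <= L) ->
  (forall x, U x -> lipschitz_on V (f x) l) ->
  (forall x, U x -> lipschitz_vec_on V (gradf x) r) ->
  (forall x, U x -> is_max_on V (f x) (phi x)) ->
  U ustar -> (forall x, U x -> phi ustar <= phi x) ->
  (forall i, U (u i)) ->
  (forall i v, In v (A i) -> V v) ->
  (forall i, 0 <= eps i /\ 0 <= rho i /\ 0 <= xi i) ->
  (forall i, conv_hull (fun w => exists v, Reps f (A i) (u i) (eps i) v /\ w = gradf (u i) v) (z i)) ->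
  (forall i, u (S i) = vsub (u i) (vscale (rho i) (z i))) ->
  (forall i, (i0 <= i)%nat ->
     finite_set (Rmaxset V f phi (u i)) /\ finite_set (Slocset V f (u i)) /\
     exists zt delta,
       zeta_is V f phi (u i) zt /\
       (match zt with None => True | Some zv => eps i < zv end) /\
       (exists m1 m2, dH_is (Rmaxset V f phi (u i)) (fun v => In v (A i)) m1 /\
                      dH_is (fun v => In v (A i)) (Slocset V f (u i)) m2 /\
                      Rmax m1 m2 <= delta) /\
       (match zt with None => True | Some zv => delta < / 2 * (zv - eps i) / l end) /\
       delta <= / 2 * xi i / (r * B)) ->
  cv_infty (fun n => sum_f_R0 rho n) ->
  (exists s, Un_cv (fun n => sum_f_R0 (fun i => rho i ^ 2) n) s) ->
  (exists s, Un_cv (fun n => sum_f_R0 (fun i => rho i * xi i) n) s) ->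
  Un_cv (runmin (fun i => phi (u i))) (phi ustar).
Proof.
move=> HUc HUcv HVc HVcv HB0 HB Hl Hr Hcont Hcv Hgr HL Hlip Hlipg Hphi Us Hmin Uu HAV Hnn Hz Hupd Hi0 Hinf [Y HY] [X HX].
set e := fun i => dot (vsub (u i) ustar) (vsub (u i) ustar).
have Hstep : forall i, (i0 <= i)%nat ->
  e (S i) <= e i - 2 * rho i * (phi (u i) - phi ustar - xi i) + rho i ^ 2 * (L * L).
{ move=> i Hi.
  have [_ [_ [zt [delta [Hzt [Hz1 [Hm [Hz2 Hxi]]]]]]]] := Hi0 i Hi.
  case: (Hnn i) => [He [Hrho Hxi0]].
  case: (Hz i) => [lst [Hlst [Hw Hzi]]].
  have Hzl : z i = Zsum lst by exact Hzi.
  have Hlow : (phi (u i) - phi ustar - xi i) * Wsum lst <= dot (Zsum lst) (vsub (u i) ustar).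
  { apply: conv_lower => p Hp. have [Hp1 [v [Hrep ->]]] := Hlst p Hp. split => //.
    apply: (@key _ _ U V f gradf phi (u i) ustar (A i) (eps i) (xi i) l r B delta zt v)
      => //; try by auto.
    exact: HAV.
  }
  have Hsq : dot (Zsum lst) (Zsum lst) <= L * L.
  { apply: conv_sq => // p Hp. have [Hp1 [v [[Inv _] ->]]] := Hlst p Hp. split => //.
    apply: dot_le_sq. apply: HL => //. exact: HAV Inv. }
  rewrite -Hzl in Hlow Hsq. rewrite /Wsum Hw in Hlow.
  have Eu : vsub (u (S i)) ustar = vsub (vsub (u i) ustar) (vscale (rho i) (z i)).
  { rewrite Hupd. apply: functional_extensionality => j. rewrite /vsub /vscale. ring. }
  rewrite /e Eu. move: Hlow. move: (vsub (u i) ustar) => h Hlow.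
  rewrite !dot_sub_l !dot_sub_r !dot_scale_l.
  rewrite (dot_sym h (vscale _ _)) (dot_sym (z i) (vscale _ _)) !dot_scale_l.
  have : rho i * (phi (u i) - phi ustar - xi i) <= rho i * dot (z i) h.
  { apply: Rmult_le_compat_l => //. lra. }
  have : rho i * rho i * dot (z i) (z i) <= rho i * rho i * (L * L).
  { apply: Rmult_le_compat_l => //. nra. }
  have -> : rho i ^ 2 = rho i * rho i by ring.
  lra. }
have Hge : forall n, phi ustar <= runmin (fun i => phi (u i)) n.
{ apply: runmin_ge => i. exact: Hmin. }
move=> eps0 Heps.
case: (classic (exists k, phi (u k) < phi ustar + eps0)) => [[k Hk]|Hno].
- exists k => n Hn. have Hle := @runmin_le (fun i => phi (u i)) k n (introT leP Hn).
  have := Hge n. rewrite /R_dist. move=> H. simpl in Hle. split_Rabs; lra.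
- exfalso.
  have Hall : forall k, phi ustar + eps0 <= phi (u k).
  { move=> k. apply: Rnot_lt_le => Hk. apply: Hno. by exists k. }
  set W := fun n => e (S n) + 2 * eps0 * sum_f_R0 rho n
     - 2 * sum_f_R0 (fun i => rho i * xi i) n - (L * L) * sum_f_R0 (fun i => rho i ^ 2) n.
  have sum_S : forall (g : nat -> R) n, sum_f_R0 g (S n) = sum_f_R0 g n + g (S n) by [].
  have Hmono : forall k, W (i0 + k)%nat <= W i0.
  { elim=> [|k IH]; first by rewrite addn0; lra.
    apply: Rle_trans IH. rewrite addnS.
    set n := (i0 + k)%nat.
    have Hs := Hstep (S n) (leq_trans (leq_addr k i0) (leqnSn _)).
    case: (Hnn (S n)) => [_ [Hrho _]].
    have := Rmult_le_compat_l (rho (S n)) (eps0 - xi (S n)) (phi (u (S n)) - phi ustar - xi (S n)) Hrho.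
    have := Hall (S n). rewrite /W !sum_S. move=> H1 H2. have := H2 ltac:(lra). lra. }
  have HXn := growing_ineq _ _ (sum_growing (fun i => rho i * xi i) (fun i => ltac:(case: (Hnn i) => [_ [? ?]]; nra))) HX.
  have HYn := growing_ineq _ _ (sum_growing (fun i => rho i ^ 2) (fun i => pow2_ge_0 (rho i))) HY.
  have HLL : 0 <= L * L by nra.
  set M := (W i0 + 2 * X + L * L * Y) / (2 * eps0).
  have [N HN] := Hinf M.
  have := HN (i0 + N)%nat ltac:(apply/leP; exact: leq_addl).
  have := Hmono N. rewrite /W.
  have := dot_nonneg (vsub (u (S (i0 + N))) ustar).
  have := HXn (i0 + N)%nat. have := HYn (i0 + N)%nat.
  have EM : 2 * eps0 * M = W i0 + 2 * X + L * L * Y by rewrite /M; field; lra.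
  rewrite /W in EM. rewrite /e in EM.
  move=> h1 h2 h3 h4 h5.
  have : 2 * eps0 * M < 2 * eps0 * sum_f_R0 rho (i0 + N) by apply: Rmult_lt_compat_l; lra.
  have : L * L * sum_f_R0 (fun i : nat => rho i ^ 2) (i0 + N) <= L * L * Y by apply: Rmult_le_compat_l.
  rewrite /e in h4.
  lra.
Qed.
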